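(* Let $\mathcal K$ be a quantum channel on $n\times n$ matrices described by Kraus operators $K_1,\dots,K_d\in\mathbb C^{n\times n}$ (with $\mathcal K(\rho)=\sum_j K_j\rho K_j^\dagger$, $\sum_j K_j^\dagger K_j=I_n$) such that $\mathrm{Tr}(K_j)=0$ for $j=2,\dots,d$. Then $$\cos^{-1}\left[\tfrac1n\,\lvert\mathrm{Tr}(K_1)\rvert\right]\le\lVert\mathcal K\rVert,$$ with $\cos^{-1}$ taking values in $[0,\pi]$.
   Context: For a unitary matrix $U$ of size $r$ with eigenvalues $e^{i\theta_j}$, $\theta_j\in(-\pi,\pi]$, its time-energy cost is $\lVert U\rVert=\max_{1\le j\le r}|\theta_j|$. For a quantum channel $\mathcal K$ acting on an $n$-dimensional system $A$, its time-energy cost is $\lVert\mathcal K\rVert=\inf_U\lVert U\rVert$, where the infimum is over all finite-dimensional ancilla systems $B$ with a fixed standard state $|0\rangle_B$ and all unitaries $U_{BA}$ on $B\otimes A$ such that $\mathcal K(\rho)=\mathrm{Tr}_B[U_{BA}(|0\rangle_B\langle 0|\otimes\rho_A)U_{BA}^\dagger]$ for all density matrices $\rho$ on $A$. *)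

(* Defs.v *)
From mathcomp Require Import all_boot all_order all_algebra.
From mathcomp.real_closed Require Import complex mxtens.
From mathcomp Require Import classical_sets reals trigo.
Set Implicit Arguments. Unset Strict Implicit. Unset Printing Implicit Defensive.
Import Order.TTheory GRing.Theory Num.Theory.
Local Open Scope ring_scope.
Local Open Scope classical_set_scope.

Section QDefs.
Variable R : realType.
Local Notation C := R[i].

Definition dag {m p : nat} (A : 'M[C]_(m, p)) : 'M[C]_(p, m) :=
  (map_mx (@conjc R) A)^T.

Definition unitary {r : nat} (U : 'M[C]_r) : Prop :=
  dag U *m U = 1%:M /\ U *m dag U = 1%:M.

Definition density {n : nat} (rho : 'M[C]_n) : Prop :=
  [/\ dag rho = rho,
      (forall v : 'cV[C]_n, 0 <= (dag v *m rho *m v) 0 0)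
    & \tr rho = 1].

Definition kraus_map {n d : nat} (K : 'I_d -> 'M[C]_n) (rho : 'M[C]_n)
  : 'M[C]_n := \sum_(j < d) K j *m rho *m dag (K j).

(* partial trace over the first factor B of B (x) A, dim B = m, dim A = n,
   with the Kronecker indexing of mxtens (B index first). *)
Definition ptraceB {m n : nat} (X : 'M[C]_(m * n)) : 'M[C]_n :=
  \matrix_(i, j) \sum_(b < m) X (mxtens_index (b, i)) (mxtens_index (b, j)).

(* time-energy cost of a unitary: max |theta_j| over the eigenvalues
   e^{i theta_j}, theta_j in (-pi, pi] (the set is finite, so sup = max) *)
Definition unitary_cost {r : nat} (U : 'M[C]_r) : R :=
  sup [set t : R | exists theta : R,
         [/\ - pi < theta <= pi,
             eigenvalue U (cos theta +i* sin theta)%C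
           & t = `|theta|]].

(* time-energy cost of a channel on an n-dimensional system: infimum over
   ancillas B of dimension m.+1 (standard state |0> = basis vector 0) and
   unitaries U on B (x) A dilating the channel. *)
Definition channel_cost {n : nat} (Kc : 'M[C]_n -> 'M[C]_n) : R :=
  inf [set c : R | exists (m : nat) (U : 'M[C]_(m.+1 * n)),
         [/\ unitary U,
             (forall rho : 'M[C]_n, density rho ->
                Kc rho = ptraceB (U *m (delta_mx (ord0 : 'I_m.+1) ord0 *t rho) *m dag U))
           & c = unitary_cost U]].

End QDefs.

(* Main.v *)
Require Import Defs.
From mathcomp Require Import all_boot all_order all_algebra.
From mathcomp.real_closed Require Import complex mxtens.
From mathcomp Require Import classical_sets boolp reals trigo.
From mathcomp Require Import sesquilinear spectral.
Import Order.TTheory GRing.Theory Num.Theory.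
Local Open Scope ring_scope.
Local Open Scope sesquilinear_scope.
Set Implicit Arguments. Unset Strict Implicit. Unset Printing Implicit Defensive.
From mathcomp Require Import ring.

Section PD.
Variable R : realType.
Local Notation C := R[i].

Lemma dag_tc m p (A : 'M[C]_(m,p)) : dag A = map_mx Num.conj (A^T).
Proof. by rewrite /dag map_trmx. Qed.

Lemma unitary_Re_diag r (U : 'M[C]_r) (a : C) : a \is Num.real -> unitary U ->
  (forall l, eigenvalue U l -> a <= 'Re l) -> forall i, a <= 'Re (U i i).
Proof.
move=> aR [UU1 UU2] Hl i.
have UN : U \is normalmx.
  by apply/normalmxP; rewrite -!dag_tc UU1 UU2.
have E := orthomx_spectralP UN.
set P := spectralmx U in E; set D := spectral_diag U in E.
have Pu : P \is unitarymx := spectral_unitarymx U.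
have Punit : P \in unitmx := spectral_unit U.
have PtP : P ^t* *m P = 1%:M by rewrite -invmx_unitary // mulVmx.
have eig : forall j, eigenvalue U (D 0 j).
  move=> j; apply/eigenvalueP; exists (row j P).
    rewrite -row_mul E !mulmxA mulmxV // mul1mx mul_diag_mx.
    by apply/rowP => k; rewrite !mxE.
  apply/eqP => /(congr1 (mulmx^~ (invmx P))); rewrite -row_mul mulmxV // mul0mx.
  by move/rowP/(_ j); rewrite !mxE eqxx /= => /eqP; rewrite oner_eq0.
have -> : U i i = \sum_j `|P j i| ^+ 2 * D 0 j.
  rewrite {1}E invmx_unitary // mul_mx_diag mxE; apply: eq_bigr => j _.
  by rewrite !mxE normCKC mulrAC.
have -> : a = \sum_j `|P j i| ^+ 2 * a.
  rewrite -mulr_suml.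
  have : (P ^t* *m P) i i = 1 by rewrite PtP mxE eqxx.
  rewrite mxE => HH; rewrite -[X in X = _]mulr1 -HH mulrC; congr (_ * _); apply: eq_bigr => j _.
  by rewrite !mxE normCKC.
rewrite raddf_sum; apply: ler_sum => j _.
rewrite /= ReMl ?normr_real ?rpredX //.
  by rewrite ler_wpM2l ?exprn_ge0 ?normr_ge0 ?Hl.
exact: normr_real.
Qed.
End PD.

Section PE.
Variable R : realType.
Local Notation C := R[i].

Lemma eig_norm1 r (U : 'M[C]_r) l : unitary U -> eigenvalue U l -> `|l| = 1.
Proof.
move=> [UU1 UU2] /eigenvalueP [v Hv vn0].
have UU : U *m U ^t* = 1%:M by rewrite -dag_tc.
have h1 : (v *m U) *m (v *m U) ^t* = v *m v ^t*.
  by rewrite trmx_mul map_mxM mulmxA -(mulmxA v) UU mulmx1.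
have h2 : (v *m U) *m (v *m U) ^t* = (`|l| ^+ 2) *: (v *m v ^t*).
  rewrite Hv linearZ /= map_mxZ -scalemxAl -scalemxAr scalerA.
  by rewrite normCK.
have s0 : (v *m v ^t*) 0 0 != 0.
  by rewrite -dotmxE dnorm_eq0.
have : (v *m v ^t*) 0 0 = `|l| ^+ 2 * (v *m v ^t*) 0 0.
  by rewrite -{1}h1 h2 mxE.
rewrite -[X in X = _]mul1r => /(mulIf s0) /esym /eqP.
rewrite sqrf_eq1 => /orP [/eqP //|/eqP hl].
by have := normr_ge0 l; rewrite hl ler0N1.
Qed.

Lemma polar (l : C) : `|l| = 1 ->
  exists theta : R, - pi < theta <= pi /\ l = (cos theta +i* sin theta)%C.
Proof.
case: l => a b; rewrite normc_def /= => /(congr1 (@complex.Re R)) /= h.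
have hab : a ^+ 2 + b ^+ 2 = 1.
  by rewrite -[LHS]sqr_sqrtr ?addr_ge0 ?sqr_ge0 // h expr1n.
have a1 : -1 <= a <= 1.
  rewrite -ler_norml -(@ler_pXn2r _ 2) ?normr_ge0 // ?expr1n ?real_normK ?num_real //.
    by rewrite -hab lerDl sqr_ge0.
  by rewrite qualifE /= ler01.
have sa : sin (acos a) = `|b|.
  rewrite sin_acos //.
  have -> : 1 - a ^+ 2 = b ^+ 2 by apply/eqP; rewrite subr_eq addrC hab.
  by rewrite sqrtr_sqr.
have ca : cos (acos a) = a.
  by rewrite acosK // in_itv /= a1.
case: (lerP 0 b) => hb.
  exists (acos a); split.
    by rewrite acos_lepi // andbT (lt_le_trans _ (acos_ge0 _)) // oppr_lt0 pi_gt0.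
  by rewrite ca sa ger0_norm.
exists (- acos a); split.
  rewrite ltrN2 acos_ltpi ?(andP a1).2 //= ?andbT.
    by rewrite (le_trans _ (@pi_ge0 R)) // oppr_le0 acos_ge0.
  have := (andP a1).1; rewrite le_eqVlt => /orP[/eqP ha|//].
  move: hab; rewrite -ha sqrrN expr1n => /(canRL (addKr _)); rewrite addNr.
  move/eqP; rewrite sqrf_eq0 => /eqP hb0; move: hb; rewrite hb0; by move=> /lt_eqF; rewrite eqxx.
by rewrite cosN sinN ca sa ltr0_norm ?opprK.
Qed.
End PE.

Section PF.
Variable R : realType.
Local Notation C := R[i].

Lemma cos_abs (x : R) : cos `|x| = cos x.
Proof. by case: (lerP 0 x) => hx; [rewrite ger0_norm | rewrite ltr0_norm // cosN]. Qed.

Lemma cost_props r (U : 'M[C]_r) : (0 < r)%N -> unitary U ->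
  0 <= unitary_cost U <= pi /\
  forall i, ((cos (unitary_cost U))%:C)%C <= 'Re (U i i).
Proof.
move=> r0 Uu; rewrite /unitary_cost.
set T := (X in sup X).
have Tb : forall t, T t -> 0 <= t <= pi.
  move=> t [th [/andP [h1 h2] _ ->]]; rewrite normr_ge0 /= ler_norml h2 andbT.
  exact: ltW.
have Tin : forall l, eigenvalue U l -> exists th, T `|th| /\ complex.Re l = cos th.
  move=> l hl; have [th [hth E]] := polar (eig_norm1 Uu hl).
  exists th; split; last by rewrite E.
  exists th; split; [exact: hth | rewrite -E; exact: hl | by []].
have [l0 hl0] := eigenvalue_closed U r0.
have [th0 [Tth0 _]] := Tin l0 hl0.
have Tne : (T !=set0)%classic by exists `|th0|.
have Ts : has_sup T by split => //; exists pi => t /Tb /andP[].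
have c0 : 0 <= sup T.
  by apply: le_trans (sup_upper_bound Ts Tth0); rewrite normr_ge0.
have cpi : sup T <= pi by apply: ge_sup => // t /Tb /andP[].
split; first by rewrite c0 cpi.
apply: unitary_Re_diag => //; first by rewrite complex_real.
move=> l hl; have [th [Tth Eth]] := Tin l hl.
rewrite -complexRe lecR Eth -(cos_abs th).
have := sup_upper_bound Ts Tth; rewrite leNgt => hc.
have /andP [t0 tpi] := Tb _ Tth.
rewrite leNgt ltr_cos //; rewrite in_itv /= ?c0 ?cpi ?t0 ?tpi //.
Qed.
End PF.

Section PG.
Variable R : realType.
Local Notation C := R[i].

Definition linm n (F : 'M[C]_n -> 'M[C]_n) :=
  forall (a : C) X Y, F (a *: X + Y) = a *: F X + F Y.

Lemma linm0 n (F : 'M[C]_n -> 'M[C]_n) : linm F -> F 0 = 0.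
Proof.
move=> hF; have := hF 1 0 0; rewrite !scale1r addr0 => h.
by apply: (addrI (F 0)); rewrite addr0 -h.
Qed.

Lemma linmD n (F : 'M[C]_n -> 'M[C]_n) : linm F -> forall X Y, F (X + Y) = F X + F Y.
Proof. by move=> hF X Y; have := hF 1 X Y; rewrite !scale1r. Qed.

Lemma linmZ n (F : 'M[C]_n -> 'M[C]_n) : linm F -> forall a X, F (a *: X) = a *: F X.
Proof. by move=> hF a X; rewrite -[a *: X]addr0 hF linm0 // addr0. Qed.

Lemma linmN n (F : 'M[C]_n -> 'M[C]_n) : linm F -> forall X, F (- X) = - F X.
Proof. by move=> hF X; rewrite -scaleN1r linmZ // scaleN1r. Qed.

Lemma dag_mul m p q (A : 'M[C]_(m, p)) (B : 'M[C]_(p, q)) :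
  dag (A *m B) = dag B *m dag A.
Proof. by rewrite /dag map_mxM trmx_mul. Qed.

Lemma dagK m p (A : 'M[C]_(m, p)) : dag (dag A) = A.
Proof.
by apply/matrixP => i j; rewrite !mxE conjcK.
Qed.

Lemma dagZ m p (a : C) (A : 'M[C]_(m, p)) : dag (a *: A) = (conjc a) *: dag A.
Proof. by apply/matrixP => i j; rewrite !mxE rmorphM. Qed.

Lemma dagD m p (A B : 'M[C]_(m, p)) : dag (A + B) = dag A + dag B.
Proof. by apply/matrixP => i j; rewrite !mxE rmorphD. Qed.

Lemma polar_id (a b a' b' j : C) : j ^+ 2 = -1 ->
  2 * (a * b') = (a + b) * (a' + b') - a * a' - b * b'
     + j * ((a + j * b) * (a' - j * b') - a * a' - b * b').
Proof.
move=> hj.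
have -> : (a + b) * (a' + b') - a * a' - b * b'
     + j * ((a + j * b) * (a' - j * b') - a * a' - b * b') =
     2 * (a * b') + (j ^+ 2 + 1) * (b * a' - a * b' - j * (b * b')) by ring.
by rewrite hj addNr mul0r addr0.
Qed.
End PG.

Section PG2.
Variable R : realType.
Local Notation C := R[i].

Lemma dag11 (x : 'M[C]_1) : dag x 0 0 = conjc (x 0 0).
Proof. by rewrite !mxE. Qed.

Lemma rank1_density n (w : 'cV[C]_n) (s : C) : s = \sum_i `|w i 0| ^+ 2 -> s != 0 ->
  density (s^-1 *: (w *m dag w)).
Proof.
move=> hs s0.
have sge0 : 0 <= s by rewrite hs sumr_ge0 // => i _; rewrite exprn_ge0 ?normr_ge0.
have cs : conjc (s^-1) = s^-1.
  by apply: (@conj_Creal _ (s^-1)); rewrite ger0_real // invr_ge0.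
split.
- by rewrite dagZ dag_mul dagK cs.
- move=> v; rewrite -scalemxAr -scalemxAl mxE !mulmxA.
  rewrite -(mulmxA (dag v *m w)) mxE big_ord1.
  have -> : dag w *m v = dag (dag v *m w) by rewrite dag_mul dagK.
  rewrite dag11 -normCK.
  by rewrite mulr_ge0 ?invr_ge0 ?exprn_ge0 ?normr_ge0.
- rewrite mxtraceZ.
  have -> : \tr (w *m dag w) = s.
    rewrite hs /mxtrace; apply: eq_bigr => i _.
    by rewrite mxE big_ord1 !mxE normCK.
  by rewrite mulVf.
Qed.
End PG2.

Section PG3.
Variable R : realType.
Local Notation C := R[i].

Lemma conjcE (x : C) : conjc x = Num.conj x. Proof. by []. Qed.

Lemma outerE n (x y : 'cV[C]_n) i j : (x *m dag y) i j = x i 0 * Num.conj (y j 0).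
Proof. by rewrite mxE big_ord1 !mxE. Qed.

Lemma agree_rank1 n (H : 'M[C]_n -> 'M[C]_n) : linm H ->
  (forall rho, density rho -> H rho = 0) -> forall w : 'cV_n, H (w *m dag w) = 0.
Proof.
move=> hH hd w; set s := \sum_i `|w i 0| ^+ 2.
case: (eqVneq s 0) => s0.
  have w0 : w = 0.
    apply/matrixP => i j; rewrite ord1 mxE.
    have hz : forall k : 'I_n, true -> 0 <= `|w k 0| ^+ 2.
      by move=> k _; rewrite exprn_ge0 ?normr_ge0.
    move: (psumr_eq0P hz s0) => /(_ i isT) /eqP.
    by rewrite expf_eq0 /= normr_eq0 => /eqP.
  by rewrite w0 mul0mx linm0.
have -> : w *m dag w = s *: (s^-1 *: (w *m dag w)) by rewrite scalerA mulfV // scale1r.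
by rewrite linmZ // hd ?scaler0 //; apply: rank1_density.
Qed.
End PG3.

Section PG4.
Variable R : realType.
Local Notation C := R[i].

Lemma agree_uv n (H : 'M[C]_n -> 'M[C]_n) : linm H ->
  (forall w : 'cV_n, H (w *m dag w) = 0) -> forall u v : 'cV_n, H (u *m dag v) = 0.
Proof.
move=> hH hw u v.
pose P1 := (u + v) *m dag (u + v).
pose P2 := u *m dag u.
pose P3 := v *m dag v.
pose P4 := (u + 'i *: v) *m dag (u + 'i *: v).
have key : 2%:R *: (u *m dag v) = (P1 - P2 - P3) + 'i *: (P4 - P2 - P3).
  apply/matrixP => i j; rewrite !mxE !big_ord1 !mxE.
  rewrite !conjcE !rmorphD !rmorphM /= conjCi mulNr.
  move: (u i ord0) (v i ord0) ((u j ord0)^*) ((v j ord0)^*) => a b a' b'.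
  transitivity (2 * (a * b') + ('i ^+ 2 + 1) * (b * a' - a * b' - 'i * (b * b'))).
    by rewrite sqrCi addNr mul0r addr0.
  ring.
have : H (2%:R *: (u *m dag v)) = 0.
  rewrite key (linmD hH) (linmZ hH) !(linmD hH) !(linmN hH).
  by rewrite /P1 /P2 /P3 /P4 !hw !subrr scaler0 addr0.
rewrite (linmZ hH) => /eqP; rewrite scaler_eq0 pnatr_eq0 /= => /eqP //.
Qed.
End PG4.

Section PG5.
Variable R : realType.
Local Notation C := R[i].
Lemma agree_delta n (F G : 'M[C]_n -> 'M[C]_n) : linm F -> linm G ->
  (forall rho, density rho -> F rho = G rho) ->
  forall k l, F (delta_mx k l) = G (delta_mx k l).
Proof.
move=> hF hG hd k l.
pose H := fun X => F X - G X.
have hH : linm H.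
  by move=> a X Y; rewrite /H hF hG scalerBr opprD addrACA.
have hd0 : forall rho, density rho -> H rho = 0.
  by move=> rho hr; rewrite /H hd // subrr.
have := agree_uv hH (agree_rank1 hH hd0) (delta_mx k 0) (delta_mx l 0).
have -> : (delta_mx k 0 : 'cV[C]_n) *m dag (delta_mx l 0 : 'cV[C]_n) = delta_mx k l.
  apply/matrixP => i j; rewrite outerE !mxE.
  by case: (i == k); case: (j == l); rewrite /= ?rmorph1 ?rmorph0 ?mulr0 ?mul0r ?mulr1.
by rewrite /H => /eqP; rewrite subr_eq0 => /eqP.
Qed.
End PG5.

Section PH.
Variable R : realType.
Local Notation C := R[i].

Lemma mul_delta_entry m p q (A : 'M[C]_(m, p)) (B : 'M[C]_(p, q)) k l x y :
  (A *m delta_mx k l *m B) x y = A x k * B l y.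
Proof.
rewrite mxE (bigD1 l) //= big1 ?addr0; last first.
  move=> z zl; rewrite mxE big1 ?mul0r // => w _; rewrite mxE.
  by rewrite (negPf zl) andbF mulr0.
rewrite mxE (bigD1 k) //= big1 ?addr0; last first.
  by move=> w wk; rewrite mxE (negPf wk) mulr0.
by rewrite mxE !eqxx mulr1.
Qed.

Lemma tens_delta m n (a b : 'I_m) (k l : 'I_n) :
  (delta_mx a b : 'M[C]_m) *t (delta_mx k l : 'M[C]_n) =
  delta_mx (mxtens_index (a, k)) (mxtens_index (b, l)).
Proof.
apply/matrixP => x y.
have [[x1 x2] ->] : exists p, x = mxtens_index p.
  by exists (mxtens_unindex x); rewrite mxtens_unindexK.
have [[y1 y2] ->] : exists p, y = mxtens_index p.
  by exists (mxtens_unindex y); rewrite mxtens_unindexK.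
rewrite tensmxE !mxE.
rewrite !(inj_eq (can_inj (@mxtens_indexK _ _))) !xpair_eqE.
by case: (x1 == a); case: (y1 == b); case: (x2 == k); case: (y2 == l);
  rewrite /= ?mulr0 ?mul0r ?mulr1.
Qed.

Lemma kraus_lin n d (K : 'I_d -> 'M[C]_n) : linm (kraus_map K).
Proof.
move=> a X Y; rewrite /kraus_map scaler_sumr -big_split /=; apply: eq_bigr => j _.
by rewrite mulmxDr mulmxDl -scalemxAr -scalemxAl.
Qed.

Lemma dil_lin m n (U : 'M[C]_(m.+1 * n)) :
  linm (fun rho => ptraceB (U *m (delta_mx (ord0 : 'I_m.+1) ord0 *t rho) *m dag U)).
Proof.
move=> a X Y.
have -> : (delta_mx (ord0 : 'I_m.+1) ord0 : 'M[C]_m.+1) *t (a *: X + Y) =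
   a *: (delta_mx ord0 ord0 *t X) + (delta_mx ord0 ord0 *t Y).
  by apply/matrixP => i j; rewrite !mxE mulrDr mulrCA.
rewrite mulmxDr mulmxDl -scalemxAr -scalemxAl.
by apply/matrixP => i j; rewrite !mxE mulr_sumr -big_split /=; apply: eq_bigr => b _; rewrite !mxE.
Qed.
End PH.

Section PH2.
Variable R : realType.
Local Notation C := R[i].

Lemma GK_eq n d (K : 'I_d -> 'M[C]_n) :
  \sum_k \sum_l kraus_map K (delta_mx k l) k l =
  \sum_j \tr (K j) * conjc (\tr (K j)).
Proof.
have E : forall k l, kraus_map K (delta_mx k l) k l = \sum_j K j k k * conjc (K j l l).
  move=> k l; rewrite /kraus_map summxE; apply: eq_bigr => j _.
  by rewrite mul_delta_entry !mxE.
under eq_bigr => k _ do under eq_bigr => l _ do rewrite E.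
under eq_bigr => k _ do rewrite exchange_big /=.
rewrite exchange_big /=; apply: eq_bigr => j _.
rewrite /mxtrace rmorph_sum mulr_suml; apply: eq_bigr => k _.
by rewrite mulr_sumr.
Qed.
End PH2.

Section PH3.
Variable R : realType.
Local Notation C := R[i].

Lemma GU_eq m n (U : 'M[C]_(m.+1 * n)) :
  \sum_k \sum_l ptraceB (U *m (delta_mx (ord0 : 'I_m.+1) ord0 *t delta_mx k l) *m dag U) k l =
  \sum_b (\sum_k U (mxtens_index (b, k)) (mxtens_index (ord0, k))) *
       conjc (\sum_k U (mxtens_index (b, k)) (mxtens_index (ord0, k))).
Proof.
have E : forall k l,
  ptraceB (U *m (delta_mx (ord0 : 'I_m.+1) ord0 *t delta_mx k l) *m dag U) k l =
  \sum_b U (mxtens_index (b, k)) (mxtens_index (ord0, k)) *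
         conjc (U (mxtens_index (b, l)) (mxtens_index (ord0, l))).
  move=> k l; rewrite mxE tens_delta; apply: eq_bigr => b _.
  by rewrite mul_delta_entry !mxE.
under eq_bigr => k _ do under eq_bigr => l _ do rewrite E.
under eq_bigr => k _ do rewrite exchange_big /=.
rewrite exchange_big /=; apply: eq_bigr => b _.
rewrite rmorph_sum mulr_suml; apply: eq_bigr => k _.
by rewrite mulr_sumr.
Qed.
End PH3.

Section PI.
Variable R : realType.
Local Notation C := R[i].

Lemma acos_gt1 (x : R) : 1 < x -> acos x = 0.
Proof.
move=> x1; rewrite unlock /acos; case: xgetP => //=.
move=> y _ [/andP [h1 h2] h3]; move: x1; rewrite -h3 ltNge cos_le1 //.
Qed.

Lemma acos_le (x c : R) : 0 <= x -> 0 <= c <= pi -> cos c <= x -> acos x <= c.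
Proof.
move=> x0 /andP [c0 cpi] hc.
case: (lerP x 1) => x1; last by rewrite acos_gt1.
have xI : -1 <= x <= 1 by rewrite x1 andbT (le_trans _ x0) // lerN10.
rewrite leNgt; apply/negP => hlt.
have := hlt; rewrite -ltr_cos ?in_itv /= ?c0 ?cpi ?acos_ge0 ?acos_lepi //.
by rewrite acosK ?in_itv //= ltNge hc.
Qed.

Lemma dil_bound n d (K : 'I_d.+1 -> 'M[C]_n) m (U : 'M[C]_(m.+1 * n)) :
  (0 < n)%N ->
  (forall j : 'I_d.+1, j != ord0 -> \tr (K j) = 0) ->
  unitary U ->
  (forall rho : 'M[C]_n, density rho ->
     kraus_map K rho = ptraceB (U *m (delta_mx (ord0 : 'I_m.+1) ord0 *t rho) *m dag U)) ->
  acos (complex.Re `|\tr (K ord0)| / n%:R) <= unitary_cost U.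
Proof.
move=> n0 htr Uu hU.
have hd := agree_delta (kraus_lin K) (dil_lin U) hU.
have G := GK_eq K.
rewrite (eq_bigr (fun k => \sum_l ptraceB (U *m (delta_mx (ord0 : 'I_m.+1) ord0 *t delta_mx k l) *m dag U) k l)) in G; last first.
  by move=> k _; apply: eq_bigr => l _; rewrite hd.
have G2 : \sum_(j < d.+1) \tr (K j) * conjc (\tr (K j)) = \tr (K ord0) * conjc (\tr (K ord0)).
  rewrite (bigD1 ord0) //= big1 ?addr0 //.
  by move=> j hj; rewrite htr // mul0r.
rewrite G2 GU_eq in G.
pose t0 := \sum_k U (mxtens_index (ord0 : 'I_m.+1, k)) (mxtens_index (ord0 : 'I_m.+1, k)).
have Hge : `|t0| <= `|\tr (K ord0)|.
  have : `|t0| ^+ 2 <= `|\tr (K ord0)| ^+ 2.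
    rewrite !normCK -!conjcE -G (bigD1 ord0) //= lerDl.
    by apply: sumr_ge0 => b _; rewrite conjcE -normCK exprn_ge0 ?normr_ge0.
  by rewrite ler_pXn2r // ?nnegrE ?normr_ge0.
have rpos : (0 < m.+1 * n)%N by rewrite muln_gt0.
have [cI cdiag] := cost_props rpos Uu.
set c := unitary_cost U in cI cdiag *.
have Rt0 : ((cos c)%:C)%C *+ n <= 'Re t0.
  rewrite /t0 raddf_sum -[n in _ *+ n]card_ord -sumr_const.
  by apply: ler_sum => k _; apply: cdiag.
have hRe : 'Re t0 <= `|t0| := (leif_Re_Creal t0).1.
have hx : `|\tr (K ord0)| = ((complex.Re `|\tr (K ord0)|)%:C)%C by rewrite normc_def.
set x := complex.Re `|\tr (K ord0)| in hx *.
have h1 : ((cos c *+ n)%:C <= x%:C)%C.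
  by rewrite rmorphMn /= -hx (le_trans Rt0) // (le_trans hRe).
rewrite lecR in h1.
have x0 : 0 <= x by rewrite -lecR -hx normr_ge0.
have n0R : (0 : R) < n%:R by rewrite ltr0n.
apply: acos_le => //; first by rewrite divr_ge0 // ler0n.
by rewrite ler_pdivlMr // mulr_natr.
Qed.
End PI.

Section PJ.
Variable R : realType.
Local Notation C := R[i].

Lemma sum_tens (p n : nat) (F : 'I_(p * n) -> C) :
  \sum_r F r = \sum_(j < p) \sum_(i < n) F (mxtens_index (j, i)).
Proof.
rewrite pair_big /=.
rewrite (reindex (@mxtens_index p n)) /=; last first.
  by exists (@mxtens_unindex p n) => x _; rewrite (mxtens_indexK, mxtens_unindexK).
by apply: eq_bigr => -[j i].
Qed.

Lemma cast_mul a b c p q (e1 : a = p) (e2 : b = q) (e3 : c = p)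
  (A : 'M[C]_(a, b)) (B : 'M[C]_(b, c)) :
  castmx (e1, e2) A *m castmx (e2, e3) B = castmx (e1, e3) (A *m B).
Proof. by case: p / e1 e3 => e3; case: q / e2; subst c; rewrite !castmx_id. Qed.

Lemma cast_one a p (e : a = p) : castmx (e, e) (1%:M : 'M[C]_a) = 1%:M.
Proof. by case: p / e; rewrite castmx_id. Qed.

Lemma dag_cast a b p q (e1 : a = p) (e2 : b = q) (A : 'M[C]_(a, b)) :
  dag (castmx (e1, e2) A) = castmx (e2, e1) (dag A).
Proof. by case: p / e1; case: q / e2; rewrite !castmx_id. Qed.

Lemma dag_block m1 m2 n1 n2 (A : 'M[C]_(m1, n1)) (B : 'M[C]_(m1, n2))
  (Cc : 'M[C]_(m2, n1)) (D : 'M[C]_(m2, n2)) :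
  dag (block_mx A B Cc D) = block_mx (dag A) (dag Cc) (dag B) (dag D).
Proof. by rewrite /dag map_block_mx tr_block_mx. Qed.

Lemma dag0 m p : dag (0 : 'M[C]_(m, p)) = 0.
Proof. by apply/matrixP => i j; rewrite !mxE rmorph0. Qed.

Lemma dag1 m : dag (1%:M : 'M[C]_m) = 1%:M.
Proof. by apply/matrixP => i j; rewrite !mxE eq_sym rmorph_nat. Qed.

Lemma dagB m p (A B : 'M[C]_(m, p)) : dag (A - B) = dag A - dag B.
Proof. by apply/matrixP => i j; rewrite !mxE rmorphB. Qed.
End PJ.

Section PJ2.
Variable R : realType.
Local Notation C := R[i].

Lemma lin_ext n (F G : 'M[C]_n -> 'M[C]_n) : linm F -> linm G ->
  (forall x y, F (delta_mx x y) = G (delta_mx x y)) -> forall rho, F rho = G rho.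
Proof.
move=> hF hG hd rho; rewrite (matrix_sum_delta rho).
rewrite !(big_morph F (linmD hF) (linm0 hF)) !(big_morph G (linmD hG) (linm0 hG)).
apply: eq_bigr => x _.
rewrite !(big_morph F (linmD hF) (linm0 hF)) !(big_morph G (linmD hG) (linm0 hG)).
by apply: eq_bigr => y _; rewrite (linmZ hF) (linmZ hG) hd.
Qed.

Variables (n p : nat) (K : 'I_p -> 'M[C]_n).
Hypothesis hK : \sum_j dag (K j) *m K j = 1%:M.

Definition Vmx : 'M[C]_(p * n, n) :=
  \matrix_(r, x) K (mxtens_unindex r).1 (mxtens_unindex r).2 x.

Lemma Vmx_idx j k x : Vmx (mxtens_index (j, k)) x = K j k x.
Proof. by rewrite mxE mxtens_indexK. Qed.

Lemma VdV : dag Vmx *m Vmx = 1%:M.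
Proof.
rewrite -hK; apply/matrixP => k l; rewrite summxE mxE sum_tens.
apply: eq_bigr => j _; rewrite mxE; apply: eq_bigr => i _.
by rewrite !mxE !mxtens_indexK.
Qed.

Definition Pmx := 1%:M - Vmx *m dag Vmx.

Lemma PV : Pmx *m Vmx = 0.
Proof. by rewrite /Pmx mulmxBl mul1mx -mulmxA VdV mulmx1 subrr. Qed.

Lemma VP : dag Vmx *m Pmx = 0.
Proof. by rewrite /Pmx mulmxBr mulmx1 mulmxA VdV mul1mx subrr. Qed.

Lemma PP : Pmx *m Pmx = Pmx.
Proof. by rewrite {1}/Pmx mulmxBl mul1mx -mulmxA VP mulmx0 subr0. Qed.

Lemma dagP : dag Pmx = Pmx.
Proof. by rewrite /Pmx dagB dag1 dag_mul dagK. Qed.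

Definition Wmx : 'M[C]_(p * n + n, n + p * n) :=
  block_mx Vmx Pmx 0 (dag Vmx).

Definition eC : (n + p * n = p.+1 * n)%N := esym (mulSn p n).
Definition eR : (p * n + n = p.+1 * n)%N := etrans (addnC _ _) eC.

Definition Umx : 'M[C]_(p.+1 * n) := castmx (eR, eC) Wmx.

Lemma Umx_unitary : unitary Umx.
Proof.
have h1 : dag Wmx *m Wmx = 1%:M.
  rewrite /Wmx dag_block dag0 dagP dagK mulmx_block.
  rewrite VdV VP PV PP !mul0mx !mulmx0 !addr0 ?add0r.
  rewrite /Pmx subrK.
  by rewrite -scalar_mx_block.
have h2 : Wmx *m dag Wmx = 1%:M.
  rewrite /Wmx dag_block dag0 dagP dagK mulmx_block.
  rewrite VdV VP PV PP !mul0mx !mulmx0 ?addr0 ?add0r.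
  rewrite addrC /Pmx subrK.
  by rewrite -scalar_mx_block.
split.
  by rewrite /Umx dag_cast cast_mul h1 cast_one.
by rewrite /Umx dag_cast cast_mul h2 cast_one.
Qed.

Lemma Umx_lo (b : 'I_p) k x :
  Umx (mxtens_index (widen_ord (leqnSn p) b, k)) (mxtens_index (ord0, x)) = K b k x.
Proof.
rewrite /Umx castmxE /=.
have -> : cast_ord (esym eR) (mxtens_index (widen_ord (leqnSn p) b, k)) =
          lshift n (mxtens_index (b, k)) by apply: val_inj.
have -> : cast_ord (esym eC) (mxtens_index (ord0 : 'I_p.+1, x)) =
          lshift (p * n) x by apply: val_inj => /=; rewrite mul0n add0n.
by rewrite /Wmx block_mxEul Vmx_idx.
Qed.

Lemma Umx_hi k x :
  Umx (mxtens_index (ord_max, k)) (mxtens_index (ord0, x)) = 0.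
Proof.
rewrite /Umx castmxE /=.
have -> : cast_ord (esym eR) (mxtens_index (ord_max : 'I_p.+1, k)) =
          rshift (p * n) k by apply: val_inj.
have -> : cast_ord (esym eC) (mxtens_index (ord0 : 'I_p.+1, x)) =
          lshift (p * n) x by apply: val_inj => /=; rewrite mul0n add0n.
by rewrite /Wmx block_mxEdl mxE.
Qed.

Lemma Umx_channel (rho : 'M[C]_n) :
  kraus_map K rho = ptraceB (Umx *m (delta_mx (ord0 : 'I_p.+1) ord0 *t rho) *m dag Umx).
Proof.
apply: (lin_ext (kraus_lin K) (dil_lin Umx)) => x y.
apply/matrixP => k l.
rewrite /kraus_map summxE mxE tens_delta big_ord_recr /=.
rewrite mul_delta_entry Umx_hi mul0r addr0.
apply: eq_bigr => b _.
by rewrite !mul_delta_entry !mxE !Umx_lo.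
Qed.
End PJ2.

Section Final.
Lemma lemma2_aux (R : realType) (n d : nat) (K : 'I_d.+1 -> 'M[R[i]]_n) :
  (0 < n)%N ->
  \sum_(j < d.+1) dag (K j) *m K j = 1%:M ->
  (forall j : 'I_d.+1, j != ord0 -> \tr (K j) = 0) ->
  acos (complex.Re `|\tr (K ord0)| / n%:R) <= channel_cost (kraus_map K).
Proof.
move=> n0 hK htr; rewrite /channel_cost.
apply: lb_le_inf.
  exists (unitary_cost (Umx K)); exists d.+1, (Umx K); split.
  - exact: Umx_unitary hK.
  - by move=> rho _; apply: Umx_channel.
  - by [].
move=> c [m [U [Uu hU ->]]].
exact: dil_bound n0 htr Uu hU.
Qed.
End Final.

Local Close Scope sesquilinear_scope.
Unset Implicit Arguments.

Theorem lemma2 (R : realType) (n d : nat) (K : 'I_d.+1 -> 'M[R[i]]_n) :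
  (0 < n)%N ->
  \sum_(j < d.+1) dag (K j) *m K j = 1%:M ->
  (forall j : 'I_d.+1, j != ord0 -> \tr (K j) = 0) ->
  acos (complex.Re `|\tr (K ord0)| / n%:R) <= channel_cost (kraus_map K).
Proof. exact: lemma2_aux. Qed.
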